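(* Let $\eta$ be an $\mathbb S$-invariant Borel probability measure on $I^{\mathbb Z}$, ergodic for $\mathbb S$, such that $(I^{\mathbb Z},\eta,\mathbb S)$ has a factor isomorphic to the odometer $(I^{\mathbb N},m,\mathbb O)$. Then for every $\alpha\in I^{\mathbb N}$ the measure $\nu^{(\alpha)}[\eta]$ defined below exists, belongs to $\mathbb M$, is ergodic with respect to $\mathbb S\times\mathbb O$, and satisfies $\theta_0[\nu^{(\alpha)}[\eta]]=\eta$. In particular there is an aperiodic ergodic $\nu\in\mathbb M$ with $\theta_0[\nu]=\eta$.
   Context: $I=\{0,1\}$. $\mathbb S$ is the left shift on $I^{\mathbb Z}$; $\mathbb S^j\eta$ denotes pushforward. $I^{\mathbb N}$ is the space of $0$–$1$ sequences $(\alpha_i)_{i\ge1}$ with uniform Bernoulli measure $m$; $\mathbb O$ is the odometer (if $\alpha_1=\dots=\alpha_{n-1}=1$, $\alpha_n=0$, then $\mathbb O[\alpha]_i=0$ for $i<n$, $\mathbb O[\alpha]_n=1$, $\mathbb O[\alpha]_i=\alpha_i$ for $i>n$). $\mathbb M$ is the set of Borel probability measures on $I^{\mathbb Z}\times I^{\mathbb N}$ invariant under $\mathbb S\times\mathbb O$. $A_{r,k}=\{\alpha:\sum_{i=1}^k\alpha_i2^{i-1}=r\}$; $\theta_k[\nu]$ is the normalized projection to $I^{\mathbb Z}$ of $\nu$ restricted to $I^{\mathbb Z}\times A_{0,k}$. A measure $\nu\in\mathbb M$ is of periodic type if $\nu=\sum_{i=0}^{2^k-1}\mathbb S^i\eta'\times(\chi_{A_{i,k}}m)$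 for some $k$ and some $\mathbb S^{2^k}$-invariant $\eta'$, and aperiodic otherwise. A sequence $(\theta_k)$ of probability measures with $\mathbb S^{2^k}\theta_k=\theta_k$ and $\theta_k=\frac12(\theta_{k+1}+\mathbb S^{2^k}\theta_{k+1})$ for all $k$ determines a unique $\nu\in\mathbb M$ with $\theta_k[\nu]=\theta_k$. Construction: let $\varrho_n=e^{2\pi i/2^n}$. Under the hypothesis, fix measurable $f_n$ ($n\ge0$) with $f_n\circ\mathbb S=\varrho_nf_n$ $\eta$-a.e., $f_0=1$, $f_n=f_{n+1}^2$ (such a family exists; then $f_n$ takes values in $\{\varrho_n^r:0\le r<2^n\}$ a.e.). Let $B(r,n)=\{w:f_n(w)=\varrho_n^r\}$, $r(n,\alpha)=\sum_{k=0}^{n-1}2^k\alpha_{k+1}$, $\theta_n^{(\alpha)}=2^n\,\eta|_{B(r(n,\alpha),n)}$. Then $\nu^{(\alpha)}[\eta]$ is the element of $\mathbb M$ with $\theta_n[\nu^{(\alpha)}[\eta]]=\theta_n^{(\alpha)}$ for all $n\ge0$. *)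

(* Defs.v *)
From HB Require Import structures.
From mathcomp Require Import all_boot all_order all_algebra.
From mathcomp Require Import all_classical all_reals all_analysis.
From mathcomp Require complex.
Import complex.ComplexField.

Set Implicit Arguments.
Unset Strict Implicit.
Unset Printing Implicit Defensive.

Import Order.TTheory GRing.Theory Num.Theory.
Local Open Scope classical_set_scope.
Local Open Scope ring_scope.

(* The spaces I^Z and I^N, I = {0,1} = bool, with the product (= Borel) *)
(* sigma-algebra, generated by the one-coordinate cylinders.           *)
(* Convention: alpha : nat -> bool, with alpha k standing for the      *)
(* paper's alpha_{k+1}.                                                *)

Definition cylZ : set (set (int -> bool)) :=
  [set A | exists (i : int) (b : bool), A = [set w | w i = b]].
Definition cylN : set (set (nat -> bool)) :=
  [set A | exists (i : nat) (b : bool), A = [set a | a i = b]].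

Definition IZ : measurableType _ := g_sigma_algebraType cylZ.
Definition IN : measurableType _ := g_sigma_algebraType cylN.

Definition XZN : measurableType _ := (IZ * IN)%type.

Definition shiftZ (w : IZ) : IZ := fun i : int => w (i + 1).

(* odometer O on I^N: bit i flips iff all lower bits are 1
   (the all-ones sequence, a null set, is sent to all zeros) *)
Definition odo (a : IN) : IN := fun i : nat => addb (a i) [forall j : 'I_i, a j].

Definition SO (x : XZN) : XZN := (shiftZ x.1, odo x.2).

Definition invariant_measure {d} {T : measurableType d} {R : realType}
  (mu : probability T R) (f : T -> T) : Prop :=
  forall A : set T, measurable A -> mu (f @^-1` A) = mu A.

Definition ergodic {d} {T : measurableType d} {R : realType}
  (mu : probability T R) (f : T -> T) : Prop :=
  forall A : set T, measurable A -> f @^-1` A = A ->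
    mu A = 0%E \/ mu A = 1%E.

Definition inM {R : realType} (nu : probability XZN R) : Prop :=
  invariant_measure nu SO.

Definition uniform_bernoulli {R : realType} (m : probability IN R) : Prop :=
  forall (k : nat) (s : nat -> bool),
    m [set a : IN | forall i : nat, (i < k)%N -> a i = s i] = ((2 : R) ^- k)%:E.

Definition has_odometer_factor {R : realType} (m : probability IN R)
  (eta : probability IZ R) : Prop :=
  exists pi : IZ -> IN,
    measurable_fun setT pi /\
    {ae eta, forall w, pi (shiftZ w) = odo (pi w)} /\
    (forall B : set IN, measurable B -> eta (pi @^-1` B) = m B).

Definition Ark (r k : nat) : set IN :=
  [set a : IN | (\sum_(i < k) (a i) * 2 ^ i)%N = r].

Definition theta {R : realType} (k : nat) (nu : probability XZN R) (B : set IZ) : R :=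
  fine (nu (B `*` Ark 0 k)) / fine (nu (setT `*` Ark 0 k)).

(* nu = sum_{i<2^k} S^i eta' x (chi_{A_{i,k}} m), stated on measurable *)
(* rectangles (which determine a finite measure on the product).       *)

Definition periodic_type {R : realType} (m : probability IN R)
  (nu : probability XZN R) : Prop :=
  exists (k : nat) (eta' : probability IZ R),
    invariant_measure eta' (iter (2 ^ k) shiftZ) /\
    forall (B : set IZ) (C : set IN), measurable B -> measurable C ->
      nu (B `*` C) =
      (\sum_(i < 2 ^ k) eta' (iter i shiftZ @^-1` B) * m (Ark i k `&` C))%E.

Definition rho {R : realType} (n : nat) : complex.complex R :=
  complex.Complex (cos (2 * pi / 2 ^+ n)) (sin (2 * pi / 2 ^+ n)).

(* measurability of a complex-valued function (Borel sigma-algebra of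
   C = R^2): real and imaginary parts measurable *)
Definition cmeasurable {R : realType} (g : IZ -> complex.complex R) : Prop :=
  measurable_fun setT (fun w => complex.Re (g w)) /\
  measurable_fun setT (fun w => complex.Im (g w)).

Definition admissible {R : realType} (eta : probability IZ R)
  (f : nat -> IZ -> complex.complex R) : Prop :=
  (forall n, cmeasurable (f n)) /\
  (forall n, {ae eta, forall w, f n (shiftZ w) = rho n * f n w}) /\
  (forall w, f 0%N w = 1) /\
  (forall n w, f n w = f n.+1 w ^+ 2).

Definition Bset {R : realType} (f : nat -> IZ -> complex.complex R)
  (r n : nat) : set IZ := [set w | f n w = rho n ^+ r].

Definition ralpha (n : nat) (alpha : IN) : nat :=
  (\sum_(k < n) 2 ^ k * alpha k)%N.

Definition theta_alpha {R : realType} (eta : probability IZ R)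
  (f : nat -> IZ -> complex.complex R) (alpha : IN) (n : nat)
  (B : set IZ) : \bar R :=
  ((2 ^+ n : R)%:E * eta (B `&` Bset f (ralpha n alpha) n))%E.

(* Main.v *)
Require Import Defs.
From HB Require Import structures.
From mathcomp Require Import all_boot all_order all_algebra.
From mathcomp Require Import all_classical all_reals all_analysis.
From mathcomp Require complex.
Import complex.ComplexField.
From mathcomp Require Import zify ring lra.

Import Order.TTheory GRing.Theory Num.Theory.
Local Open Scope classical_set_scope.
Local Open Scope ring_scope.
Section Comb.
Local Open Scope nat_scope.

Lemma ralpha0 (a : nat -> bool) : ralpha 0 a = 0.
Proof. by rewrite /ralpha big_ord0. Qed.

Lemma ralphaS n (a : nat -> bool) : ralpha n.+1 a = ralpha n a + 2 ^ n * a n.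
Proof. by rewrite /ralpha big_ord_recr. Qed.

Lemma ralpha_lt n (a : nat -> bool) : ralpha n a < 2 ^ n.
Proof.
elim: n => [|n IH]; first by rewrite ralpha0.
rewrite ralphaS expnS; case: (a n) => /=; lia.
Qed.

Lemma ralpha_mod n (a : nat -> bool) : ralpha n a = ralpha n.+1 a %% 2 ^ n.
Proof. by rewrite ralphaS addnC [2 ^ n * _]mulnC modnMDl modn_small // ralpha_lt. Qed.

Lemma ArkE j n : Ark j n = [set a | ralpha n a = j].
Proof.
rewrite /Ark /ralpha; apply/seteqP; split => a /=;
  have -> : (\sum_(i < n) a i * 2 ^ i = \sum_(i < n) 2 ^ i * a i)%N
    by apply: eq_bigr => i _; rewrite mulnC.
  all: by [].
Qed.

Lemma forall_ordS n (a : nat -> bool) :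
  [forall j : 'I_n.+1, a j] = [forall j : 'I_n, a j] && a n.
Proof.
apply/forallP/andP => [H|[/forallP H1 H2] j].
  split; last exact: (H ord_max).
  by apply/forallP => j; have := H (widen_ord (leqnSn n) j).
have [jn|] := ltnP j n; first exact: (H1 (Ordinal jn)).
by move=> nj; have -> : nat_of_ord j = n by have := ltn_ord j; lia.
Qed.

Lemma all1E n (a : nat -> bool) :
  [forall j : 'I_n, a j] = ((ralpha n a).+1 == 2 ^ n).
Proof.
elim: n => [|n IH].
  by rewrite ralpha0 expn0 eqxx; apply/forallP => -[].
rewrite forall_ordS IH ralphaS expnS.
move: (ralpha_lt n a); case: (a n) => /= lt; rewrite ?andbT ?andbF; apply/idP/idP; lia.
Qed.

Lemma r_odo n (a : nat -> bool) : ralpha n (odo a) = (ralpha n a).+1 %% 2 ^ n.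
Proof.
elim: n => [|n IH]; first by rewrite !ralpha0 expn0 modn1.
rewrite !ralphaS IH /odo all1E.
have := ralpha_lt n a; set r := ralpha n a.
have [e|ne] := eqVneq r.+1 (2 ^ n) => lt.
  rewrite e modnn /= expnS.
  case: (a n) => /=.
    have -> : (r + 2 ^ n * 1).+1 = 2 * 2 ^ n by lia.
    by rewrite modnn muln0.
  rewrite modn_small; lia.
have lt' : r.+1 < 2 ^ n by lia.
rewrite (modn_small lt') addbF modn_small // expnS; case: (a n) => /=; lia.
Qed.

Lemma r_iter_odo n j (a : nat -> bool) :
  ralpha n (iter j odo a) = (ralpha n a + j) %% 2 ^ n.
Proof.
elim: j => [|j IH] /=; first by rewrite addn0 modn_small // ralpha_lt.
by rewrite r_odo IH addnS -addn1 modnDml addn1.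
Qed.

Lemma ralpha_inj (a b : nat -> bool) :
  (forall n, ralpha n a = ralpha n b) -> a = b.
Proof.
move=> H; apply/funext => n.
have := H n.+1; rewrite !ralphaS H => /eqP; rewrite eqn_add2l.
have := expn_gt0 2 n; case: (a n); case: (b n) => //=; lia.
Qed.

End Comb.
Section NatAux.
Local Open Scope nat_scope.

Lemma split_mod P x : 0 < P -> x < P * 2 -> x = x %% P + P * (P <= x).
Proof.
move=> P0 xl; have [Px|xP] := leqP P x; last by rewrite muln0 addn0 modn_small.
have -> : x %% P = x - P.
  by rewrite -{1}(subnK Px) modnDr modn_small //; lia.
rewrite muln1; lia.
Qed.

Lemma modP_sub t r P : t < P -> r < P -> ((t + (P - r)) %% P == 0) = (t == r).
Proof.
move=> tP rP; have [rt|tr] := leqP r t.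
  have -> : t + (P - r) = (t - r) + P by lia.
  by rewrite modnDr modn_small; lia.
by rewrite modn_small; lia.
Qed.

Lemma key_mod s (b c : bool) r P : r < P ->
  ((s + P * b) + (P * 2 - (r + P * c))) %% (P * 2) %% P = (s + (P - r)) %% P.
Proof.
move=> rP; rewrite modn_dvdm; last by apply: dvdn_mulr.
have -> : (s + P * b) + (P * 2 - (r + P * c)) = (s + (P - r)) + (b + 1 - c) * P.
  by case: b; case: c; rewrite ?muln0 ?muln1 /=; lia.
by rewrite addnC modnMDl.
Qed.

End NatAux.
Definition CF (R : realType) : fieldType := complex.complex R.

Section Rho.
Variable R : realType.
Local Notation C := (CF R).

Lemma rho0 : rho 0 = 1 :> C.
Proof.
rewrite /rho expr0 divr1 mulr_natl cos2pi sin2pi.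
by [].
Qed.

Lemma rho1 : rho 1 = -1 :> C.
Proof.
rewrite /rho.
have -> : 2 * pi / 2 ^+ 1 = pi :> R by rewrite expr1; field.
rewrite cospi sinpi.
have -> : (-1 : C) = complex.Complex (-1) (-0) by [].
by rewrite oppr0.
Qed.

Lemma rho_sq n : rho n.+1 ^+ 2 = rho n :> C.
Proof.
rewrite /rho expr2 /=.
set x := 2 * pi / 2 ^+ n.+1.
have -> : 2 * pi / 2 ^+ n = x + x.
  rewrite /x exprS; field.
  by rewrite expf_neq0 // pnatr_eq0.
rewrite cosD sinD (addrC (sin x * cos x)); reflexivity.
Qed.

Lemma rho_pow2 n : rho n ^+ (2 ^ n) = 1 :> C.
Proof.
elim: n => [|n IH]; first by rewrite rho0 expr1n.
by rewrite expnS exprM rho_sq.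
Qed.

Lemma rho_half n : rho n.+1 ^+ (2 ^ n) = -1 :> C.
Proof.
elim: n => [|n IH]; first by rewrite expn0 expr1 rho1.
by rewrite expnS exprM rho_sq.
Qed.

Lemma rho_neq0 n : rho n != 0 :> C.
Proof.
apply/negP => /eqP h; have := rho_pow2 n; rewrite h expr0n expn_eq0 /=.
by move=> e; have := @oner_neq0 (CF R); rewrite -e eqxx.
Qed.

Lemma neg1_neq1 : (-1 : C) != 1.
Proof.
apply/negP => /eqP /(congr1 (@complex.Re R)) /=.
lra.
Qed.

Lemma rho_mod n i : rho n ^+ i = rho n ^+ (i %% 2 ^ n) :> C.
Proof.
by rewrite {1}(divn_eq i (2 ^ n)) exprD mulnC exprM rho_pow2 expr1n mul1r.
Qed.

Lemma rho_neq1 n d : (0 < d < 2 ^ n)%N -> rho n ^+ d != 1 :> C.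
Proof.
elim: n d => [|n IH] d; first by rewrite expn0; lia.
move=> /andP[d0 dlt]; apply/negP => /eqP h.
have [od|ed] := boolP (odd d).
  have e : (d * 2 ^ n = 2 ^ n + (d./2 * 2 ^ n.+1))%N.
    rewrite -{1}(odd_double_half d) od expnS; lia.
  have := congr1 (fun z => z ^+ (2 ^ n)) h.
  rewrite -exprM e exprD rho_half mulnC exprM rho_pow2 !expr1n mulr1.
  by move=> e1; have := neg1_neq1; rewrite e1 eqxx.
have e : d = (d./2 * 2)%N by rewrite -{1}(odd_double_half d) (negPf ed) muln2.
move: h; rewrite e mulnC exprM rho_sq; apply/eqP/IH.
rewrite expnS in dlt; apply/andP; split; lia.
Qed.

Lemma rho_eq n i j : (rho n ^+ i = rho n ^+ j :> C) <-> (i %% 2 ^ n = j %% 2 ^ n)%N.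
Proof.
split; last by move=> e; rewrite rho_mod e -rho_mod.
rewrite (rho_mod n i) (rho_mod n j).
have li := ltn_pmod i (expn_gt0 2 n); have lj := ltn_pmod j (expn_gt0 2 n).
move: (i %% 2 ^ n)%N (j %% 2 ^ n)%N li lj => {}i {}j li lj.
wlog ij : i j li lj / (i <= j)%N.
  move=> W; have [/W|/ltnW ji] := leqP i j; first exact.
  by move=> /esym e; apply/esym; apply: W.
move=> e; apply/eqP; rewrite eqn_leq ij /=; apply/negP => /negP; rewrite -ltnNge => ltij.
have : rho n ^+ (j - i) == 1 :> C.
  apply/eqP; apply: (mulfI (expf_neq0 i (rho_neq0 n))).
  by rewrite -exprD subnKC // mulr1 e.
by rewrite (negPf (@rho_neq1 n (j - i) _)) //; apply/andP; split; lia.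
Qed.

End Rho.
Section Disc.
Context d (T : measurableType d).

Lemma meas_prop (P : Prop) : measurable [set _ : T | P].
Proof.
case: (pselect P) => p.
  by have -> : [set _ : T | P] = setT by apply/seteqP; split.
by have -> : [set _ : T | P] = set0 by apply/seteqP; split.
Qed.

Lemma mfun_natE (u : T -> nat) : measurable_fun setT u ->
  forall j, measurable [set x | u x = j].
Proof. by move=> mu j; have := mu measurableT [set j] I; rewrite setTI. Qed.

Lemma mfun_boolE (u : T -> bool) : measurable_fun setT u ->
  forall j, measurable [set x | u x = j].
Proof. by move=> mu j; have := mu measurableT [set j] I; rewrite setTI. Qed.

Lemma mfun_nat (u : T -> nat) : (forall j, measurable [set x | u x = j]) ->
  measurable_fun setT u.
Proof.
move=> H _ Y _; rewrite setTI.
have -> : u @^-1` Y = \bigcup_(j in Y) [set x | u x = j].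
  by apply/seteqP; split => x /=; [move=> Yx; exists (u x) | move=> [j Yj ->]].
by apply: bigcup_measurable => j _; exact: H.
Qed.

Lemma mfun_bool (u : T -> bool) : (forall j, measurable [set x | u x = j]) ->
  measurable_fun setT u.
Proof.
move=> H _ Y _; rewrite setTI.
have -> : u @^-1` Y = ([set x | u x = true] `&` [set _ | Y true]) `|`
                      ([set x | u x = false] `&` [set _ | Y false]).
  apply/seteqP; split => x /=.
    by case: (u x) => Yx; [left|right].
  by case=> -[<-].
by apply: measurableU; apply: measurableI => //; exact: meas_prop.
Qed.

Lemma mfun_nat2 d' (X : measurableType d') (u v : T -> nat) (phi : nat -> nat -> X) :
  measurable_fun setT u -> measurable_fun setT v ->
  measurable_fun setT (fun x => phi (u x) (v x)).
Proof.
move=> mu mv _ Y _; rewrite setTI.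
have -> : (fun x => phi (u x) (v x)) @^-1` Y = \bigcup_j \bigcup_k
   ([set x | u x = j] `&` [set x | v x = k] `&` [set _ | Y (phi j k)]).
  apply/seteqP; split => x /=.
    by move=> Yx; exists (u x) => //; exists (v x).
  by move=> [j _ [k _ [[-> ->]]]].
apply: bigcupT_measurable => j; apply: bigcupT_measurable => k.
apply: measurableI; last exact: meas_prop.
by apply: measurableI; [exact: mfun_natE|exact: mfun_natE].
Qed.

Lemma mfun_b2n (v : T -> bool) : measurable_fun setT v ->
  measurable_fun setT (fun x => nat_of_bool (v x)).
Proof.
move=> mv; apply: (@measurableT_comp _ _ _ _ _ _ nat_of_bool) => //.
Qed.

End Disc.
Arguments meas_prop {d T}.
Arguments mfun_natE {d T u}.
Arguments mfun_boolE {d T u}.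
Arguments mfun_nat {d T u}.
Arguments mfun_bool {d T u}.
Arguments mfun_nat2 {d T d' X u v}.
Arguments mfun_b2n {d T v}.
Lemma meas_cylZ (i : int) (b : bool) : measurable [set w : IZ | w i = b].
Proof. by apply: sub_sigma_algebra; exists i, b. Qed.

Lemma meas_cylN (i : nat) (b : bool) : measurable [set a : IN | a i = b].
Proof. by apply: sub_sigma_algebra; exists i, b. Qed.

Section MIN.
Context d (T : measurableType d).

Lemma mfunIN (h : T -> IN) :
  (forall i, measurable_fun setT (fun x => h x i)) -> measurable_fun setT h.
Proof.
move=> H; apply: (@measurability _ _ _ IN setT h cylN); first reflexivity.
move=> _ [B [i [b ->]] <-]; rewrite setTI.
by have := mfun_boolE (H i) b; rewrite /preimage /=.
Qed.

Lemma mfunIZ (h : T -> IZ) :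
  (forall i, measurable_fun setT (fun x => h x i)) -> measurable_fun setT h.
Proof.
move=> H; apply: (@measurability _ _ _ IZ setT h cylZ); first reflexivity.
move=> _ [B [i [b ->]] <-]; rewrite setTI.
by have := mfun_boolE (H i) b; rewrite /preimage /=.
Qed.

End MIN.

Lemma mcoordN (i : nat) : measurable_fun setT (fun a : IN => a i).
Proof. by apply: mfun_bool => b; exact: meas_cylN. Qed.

Lemma mcoordZ (i : int) : measurable_fun setT (fun w : IZ => w i).
Proof. by apply: mfun_bool => b; exact: meas_cylZ. Qed.

Definition shiftk (k : int) (w : IZ) : IZ := fun i : int => w (i + k).

Lemma mshiftk k : measurable_fun setT (shiftk k).
Proof. by apply: mfunIZ => i; exact: mcoordZ. Qed.

Lemma mshiftZ : measurable_fun setT shiftZ.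
Proof. exact: (mshiftk 1). Qed.

Lemma mralpha n : measurable_fun setT (fun a : IN => ralpha n a).
Proof.
elim: n => [|n IH].
  by apply: mfun_nat => j; rewrite (_ : [set x | _] = [set _ : IN | 0%N = j]);
   [exact: meas_prop|apply/seteqP; split => x /=; rewrite ralpha0].
have := mfun_nat2 (fun j k => (j + 2 ^ n * k)%N) IH (mfun_b2n (mcoordN n)).
by apply: eq_measurable_fun => a _; rewrite ralphaS.
Qed.

Lemma modo : measurable_fun setT odo.
Proof.
apply: mfunIN => i.
have := mfun_nat2 (fun j k => addb (k == 1)%N (j.+1 == 2 ^ i)%N) (mralpha i)
  (mfun_b2n (mcoordN i)).
apply: eq_measurable_fun => a _ /=; rewrite /odo all1E.
by case: (a i).
Qed.

Lemma mSO : measurable_fun setT SO.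
Proof.
apply: measurable_fun_pair.
  exact: (measurableT_comp mshiftZ measurable_fst).
exact: (measurableT_comp modo measurable_snd).
Qed.
Lemma meas_ae_eq d (T : measurableType d) (R : realType)
  (mu : {measure set T -> \bar R}) (N X Y : set T) :
  measurable N -> mu N = 0%E -> measurable X -> measurable Y ->
  X `&` ~` N = Y `&` ~` N -> mu X = mu Y.
Proof.
move=> mN N0 mX mY e.
rewrite (measureDI mu mX mN) (measureDI mu mY mN) !setDE e.
have z Z : measurable Z -> mu (Z `&` N) = 0%E.
  move=> mZ; apply/eqP; rewrite -measure_le0 -N0; apply: le_measure.
  - by rewrite inE; exact: measurableI.
  - by rewrite inE.
  - exact: subIsetr.
congr (_ + _)%E; exact: (etrans (z _ mX) (esym (z _ mY))).
Qed.

Lemma push_prob d d' (T : measurableType d) (U : measurableType d') (R : realType)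
  (P : probability T R) (h : T -> U) :
  measurable_fun setT h -> exists nu : probability U R, forall A, nu A = P (h @^-1` A).
Proof.
move=> mh; have hP : h \in mfun by rewrite inE.
exists (distribution P (mfun_Sub hP)) => A.
by rewrite /distribution /pushforward mfun_valP.
Qed.

Lemma mArk j n : measurable (Ark j n).
Proof. by rewrite ArkE; have := mfun_natE (mralpha n) j. Qed.

Lemma Mlem (R : realType) (nu : probability XZN R) : inM nu ->
  forall n, nu (setT `*` Ark 0 n) = ((2 ^+ n : R)^-1)%:E.
Proof.
move=> nuinv n.
set P := (2 ^ n)%N.
have mA j : measurable (@setT IZ `*` Ark j n : set XZN) := measurableX measurableT (mArk j n).
have step j : (j.+1 < P)%N -> nu (setT `*` Ark j n) = nu (setT `*` Ark j.+1 n).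
  move=> jP; rewrite -(nuinv _ (mA j.+1)); congr (nu _).
  apply/seteqP; split => -[w a]; rewrite /preimage /SO /= !ArkE /= r_odo.
    by move=> [_ ->]; rewrite modn_small.
  move=> [_ e]; split => //.
  have := ralpha_lt n a; rewrite -/P => lt.
  have [e1|ne] := eqVneq (ralpha n a).+1 P; first by move: e; rewrite e1 modnn.
  by move: e; rewrite modn_small; [case | lia].
have eqall j : (j < P)%N -> nu (setT `*` Ark j n) = nu (setT `*` Ark 0 n).
  elim: j => // j IH jP; rewrite -step //; apply: IH; lia.
have cover : setT = \big[setU/set0]_(j < P) (setT `*` Ark j n) :> set XZN.
  rewrite -(bigcup_mkord _ (fun j => @setT IZ `*` Ark j n)); apply/seteqP; split => // -[w a] _.
  exists (ralpha n a); first exact: ralpha_lt.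
  by split => //; rewrite ArkE.
have := probability_setT nu; rewrite cover measure_bigsetU_ord //; last first.
  move=> i j _ _ [[w a] [[_ h1] [_ h2]]]; apply: val_inj => /=.
  by move: h1 h2; rewrite !ArkE /= => <- <-.
rewrite (eq_bigr (fun=> ((fine (nu (setT `*` Ark 0 n)))%:E))); last first.
  by move=> i _; apply: (etrans (eqall i (ltn_ord i))); rewrite fineK // fin_num_measure.
rewrite sumEFin sumr_const card_ord => /eqP; rewrite eqe => /eqP h.
rewrite -(fineK (fin_num_measure _ _ (mA 0%N))) //; congr (_%:E).
have hP0 : (P%:R : R) != 0 by rewrite pnatr_eq0 expn_eq0.
have -> : (2 ^+ n : R) = P%:R by rewrite /P natrX.
by apply: (mulIf hP0); rewrite mulVf // mulr_natr h.
Qed.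
Lemma ralpha_eq0 n (a : nat -> bool) :
  ralpha n a = 0%N <-> (forall i, (i < n)%N -> a i = false).
Proof.
elim: n => [|n IH]; first by rewrite ralpha0; split => // _ i.
rewrite ralphaS; split.
  move=> h; have h1 : ralpha n a = 0%N by lia.
  have h2 : a n = false by move: h; case: (a n) => //=; have := expn_gt0 2 n; lia.
  move=> i; rewrite ltnS leq_eqVlt => /orP[/eqP -> //|]; exact: IH.1 h1 i.
move=> h; rewrite (IH.2 (fun i hi => h i (ltnW hi))) h //.
by rewrite muln0.
Qed.

Lemma ralpha_eqpow k (a : nat -> bool) :
  ralpha k.+1 a = (2 ^ k)%N <-> (forall i, (i < k.+1)%N -> a i = (i == k)).
Proof.
rewrite ralphaS; have := ralpha_lt k a; split.
  move=> h; have ak : a k = true.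
    by move: h; case: (a k) => //=; rewrite muln0 addn0; lia.
  have r0 : ralpha k a = 0%N by move: h; rewrite ak muln1; lia.
  move=> i; rewrite ltnS leq_eqVlt => /orP[/eqP -> //|hi]; first by rewrite eqxx.
  by rewrite ((ralpha_eq0 k a).1 r0 i hi); move: hi; case: eqP => // ->; rewrite ltnn.
move=> h; have -> : a k = true by rewrite h // eqxx.
have -> : ralpha k a = 0%N.
  apply/ralpha_eq0 => i hi; rewrite h; [by move: hi; case: eqP => // ->; rewrite ltnn|lia].
by rewrite muln1.
Qed.

Lemma meas_eqIN d (T : measurableType d) (u v : T -> IN) :
  measurable_fun setT u -> measurable_fun setT v -> measurable [set x | u x = v x].
Proof.
move=> mu mv.
have -> : [set x | u x = v x] = \bigcap_i [set x | (nat_of_bool (u x i) == nat_of_bool (v x i))%N = true].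
  apply/seteqP; split => x /=; first by move=> e i _; rewrite /mkset /= e eqxx.
  move=> h; apply/funext => i; have := h i I.
  by rewrite /mkset /=; case: (u x i); case: (v x i).
apply: bigcapT_measurable => i; apply: mfun_boolE.
exact: (mfun_nat2 (fun j k => j == k)%N (mfun_b2n (measurableT_comp (mcoordN i) mu))
   (mfun_b2n (measurableT_comp (mcoordN i) mv))).
Qed.

Lemma shiftk0 w : shiftk 0 w = w.
Proof. by apply/funext => i; rewrite /shiftk addr0. Qed.

Lemma shiftkD a b w : shiftk a (shiftk b w) = shiftk (b + a) w.
Proof. by apply/funext => i; rewrite /shiftk (addrC b a) addrA. Qed.

Lemma shiftZk w : shiftZ w = shiftk 1 w.
Proof. by []. Qed.

Lemma iter_shiftZ n w : iter n shiftZ w = shiftk n w.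
Proof.
elim: n => [|n IH]; first by rewrite shiftk0.
by rewrite iterS IH shiftZk shiftkD -addn1 PoszD.
Qed.

Lemma mpre d d' (T : measurableType d) (U : measurableType d') (h : T -> U) :
  measurable_fun setT h -> forall A, measurable A -> measurable (h @^-1` A).
Proof. by move=> mh A mA; have := mh measurableT A mA; rewrite setTI. Qed.
Arguments mpre {d d' T U h}.

Lemma miter d (T : measurableType d) (h : T -> T) : measurable_fun setT h ->
  forall j, measurable_fun setT (iter j h).
Proof.
move=> mh; elim=> [|j IH]; first exact: measurable_id.
exact: (measurableT_comp mh IH).
Qed.
Arguments miter {d T h}.

Lemma iter_SO j (x : XZN) : iter j SO x = (iter j shiftZ x.1, iter j odo x.2).
Proof. by elim: j => [|j IH] /=; [case: x|rewrite IH]. Qed.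

Section Graph.
Variables (R : realType) (eta : probability IZ R) (f : nat -> IZ -> complex.complex R).
Hypothesis fad : admissible eta f.
Variable alpha : IN.
Hypothesis eta_inv : invariant_measure eta shiftZ.

Local Notation C := (CF R).

Fixpoint sf (n : nat) (w : IZ) : nat :=
  if n is n'.+1 then
    (sf n' w + 2 ^ n' * ((f n'.+1 w : C) != rho n'.+1 ^+ sf n' w))%N
  else 0%N.

Lemma sf_spec n w : f n w = rho n ^+ sf n w.
Proof.
case: fad => _ [_ [f0 fsq]].
elim: n => [|n IH] /=; first by rewrite f0 expr0.
have h : (f n.+1 w : C) ^+ 2 = (rho n.+1 ^+ sf n w) ^+ 2.
  by rewrite -exprM mulnC exprM rho_sq -IH (fsq n w).
move/eqP: h; rewrite eqf_sqr => /orP[/eqP e|/eqP e]; rewrite e.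
  by rewrite eqxx muln0 addn0.
set c := rho n.+1 ^+ sf n w.
have cn0 : c != 0 by rewrite expf_neq0 // rho_neq0.
have -> : (- c != c) = true.
  apply/negP; rewrite eqr_oppLR -addr_eq0 -mulr2n mulrn_eq0 /=.
  by rewrite (negPf cn0).
by rewrite muln1 exprD rho_half mulrN1.
Qed.

Lemma meas_feq k (c : complex.complex R) : measurable [set w | f k w = c].
Proof.
case: fad => /(_ k) [mre mim] _.
have -> : [set w | f k w = c] = [set w | complex.Re (f k w) = complex.Re c] `&`
     [set w | complex.Im (f k w) = complex.Im c].
  apply/seteqP; split => w /=; first by move=> ->.
  by case: (f k w) c => a b [a' b'] /= [-> ->].
apply: measurableI.
  by have := mre measurableT [set complex.Re c] (measurable_set1 _); rewrite setTI.
by have := mim measurableT [set complex.Im c] (measurable_set1 _); rewrite setTI.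
Qed.

Lemma msf n : measurable_fun setT (sf n).
Proof.
elim: n => [|n IH]; first exact: measurable_cst.
set Eq := [set w | f n.+1 w = rho n.+1 ^+ sf n w].
have mEq : measurable Eq.
  have -> : Eq = \bigcup_j ([set w | sf n w = j] `&` [set w | f n.+1 w = rho n.+1 ^+ j]).
    apply/seteqP; split => w /=; first by move=> e; exists (sf n w).
    by move=> [j _ [e1 e2]]; rewrite /Eq /= e2 e1.
  apply: bigcupT_measurable => j; apply: measurableI; first exact: mfun_natE.
  exact: meas_feq.
have mb : measurable_fun setT (fun w => ((f n.+1 w : C) != rho n.+1 ^+ sf n w)).
  apply: mfun_bool => -[].
    have -> : [set w | ((f n.+1 w : C) != rho n.+1 ^+ sf n w) = true] = ~` Eq.
      apply/seteqP; split => w /=.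
        by move=> /negP h e; apply: h; rewrite /Eq /= in e; rewrite e eqxx.
      by move=> h; apply/negP => /eqP e; exact: h e.
    exact: measurableC.
  have -> : [set w | ((f n.+1 w : C) != rho n.+1 ^+ sf n w) = false] = Eq.
    apply/seteqP; split => w /=; last by rewrite /Eq /= => ->; rewrite eqxx.
    by move=> /negbFE /eqP.
  exact: mEq.
exact: (mfun_nat2 (fun j k => (j + 2 ^ n * k)%N) IH (mfun_b2n mb)).
Qed.

Definition Dn (n : nat) (w : IZ) : nat :=
  ((sf n w + (2 ^ n - ralpha n alpha)) %% 2 ^ n)%N.
Definition gmap (w : IZ) : IN := fun n => (2 ^ n <= Dn n.+1 w)%N.
Definition gam (w : IZ) : XZN := (w, gmap w).

Lemma Dn_lt n w : (Dn n w < 2 ^ n)%N.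
Proof. by rewrite /Dn ltn_pmod // expn_gt0. Qed.

Lemma DnS n w : Dn n w = (Dn n.+1 w %% 2 ^ n)%N.
Proof.
rewrite /Dn /= ralphaS expnS [(2 * 2 ^ n)%N]mulnC key_mod //.
exact: ralpha_lt.
Qed.

Lemma rg n w : ralpha n (gmap w) = Dn n w.
Proof.
elim: n => [|n IH]; first by rewrite ralpha0 /Dn expn0 modn1.
rewrite ralphaS IH /gmap (DnS n w); apply/esym; apply: split_mod.
  by rewrite expn_gt0.
by rewrite -expnSr Dn_lt.
Qed.

Lemma mdisc d' (X : measurableType d') (phi : nat -> X) : measurable_fun setT phi.
Proof. by move=> _ Y _. Qed.

Lemma mgmap : measurable_fun setT gmap.
Proof.
apply: mfunIN => i.
have := measurableT_comp (@mdisc _ _ (fun j => (2 ^ i <=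
   (j + (2 ^ i.+1 - ralpha i.+1 alpha)) %% 2 ^ i.+1)%N)) (msf i.+1).
by apply: eq_measurable_fun => w _.
Qed.

Lemma mgam : measurable_fun setT gam.
Proof.
have mid : measurable_fun (@setT IZ) (fun w => w) by exact: measurable_id.
exact: (@measurable_fun_pair _ _ _ _ IZ IN (fun w => w) gmap mid mgmap).
Qed.

Lemma g_shift w : (forall n, f n (shiftZ w) = rho n * f n w) ->
  gmap (shiftZ w) = odo (gmap w).
Proof.
move=> H; apply: ralpha_inj => n; rewrite r_odo !rg /Dn.
have e : (sf n (shiftZ w) %% 2 ^ n = (sf n w).+1 %% 2 ^ n)%N.
  by apply/(@rho_eq R); move: (H n); rewrite !sf_spec exprS.
rewrite -[((_ + _) %% _).+1]addn1 modnDml -modnDml e modnDml; congr (_ %% _)%N; lia.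
Qed.

Definition E0 := [set w | gmap (shiftZ w) = odo (gmap w)].

Lemma mE0 : measurable E0.
Proof.
apply: meas_eqIN; first exact: (measurableT_comp mgmap mshiftZ).
exact: (measurableT_comp modo mgmap).
Qed.

Lemma E0_null : eta (~` E0) = 0%E.
Proof.
apply/negligibleP; first exact: (measurableC mE0).
case: fad => _ [fae _].
apply: (negligibleS _ (negligible_bigcup fae)).
move=> w /= nE; apply: contrapT => h; apply: nE; apply: g_shift => n.
by apply: contrapT => hn; apply: h; exists n.
Qed.

Lemma eta_iter n X : measurable X -> eta (iter n shiftZ @^-1` X) = eta X.
Proof.
elim: n X => [|n IH] X mX //.
have -> : iter n.+1 shiftZ @^-1` X = iter n shiftZ @^-1` (shiftZ @^-1` X).
  by apply/seteqP; split => w /=.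
have mS : measurable (shiftZ @^-1` X).
  by have := mshiftZ measurableT _ mX; rewrite setTI.
by rewrite (IH _ mS) eta_inv.
Qed.

Lemma eta_shiftk k X : measurable X -> eta (shiftk k @^-1` X) = eta X.
Proof.
move=> mX; case: k => n.
  rewrite -(eta_iter n X mX); congr (eta _).
  by apply/seteqP; split => w /=; rewrite iter_shiftZ.
set Y := shiftk (Negz n) @^-1` X.
have mY : measurable Y by have := mshiftk (Negz n) measurableT _ mX; rewrite setTI.
rewrite -(eta_iter n.+1 Y mY); congr (eta _).
have e w : shiftk (Negz n) (shiftZ (iter n shiftZ w)) = w.
  rewrite iter_shiftZ shiftZk !shiftkD.
  have -> : (n%:Z + (1 + Negz n)) = 0 by rewrite NegzE; lia.
  exact: shiftk0.
by apply/seteqP; split => w /=; rewrite /Y /= e.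
Qed.

Definition Gset := [set w | forall k : int, E0 (shiftk k w)].

Lemma mGset : measurable Gset.
Proof.
have -> : Gset = \bigcap_n (shiftk (Posz n) @^-1` E0 `&` shiftk (Negz n) @^-1` E0).
  apply/seteqP; split => w /=; first by move=> h n _; split; exact: h.
  by move=> h [] n; have [] := h n I.
apply: bigcapT_measurable => n; apply: measurableI.
  by have := mshiftk n measurableT _ mE0; rewrite setTI.
by have := mshiftk (Negz n) measurableT _ mE0; rewrite setTI.
Qed.

Lemma Gset_null : eta (~` Gset) = 0%E.
Proof.
apply/negligibleP; first exact: (measurableC mGset).
have nk k : eta.-negligible (~` (shiftk k @^-1` E0)).
  apply/negligibleP.
    by apply: measurableC; have := mshiftk k measurableT _ mE0; rewrite setTI.
  rewrite preimage_setC; exact: (etrans (eta_shiftk k (~` E0) (measurableC mE0)) E0_null).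
apply: (negligibleS _ (negligible_bigcup (fun n => negligibleU (nk (Posz n)) (nk (Negz n))))).
move=> w /= nG; apply: contrapT => h; apply: nG => k.
apply: contrapT => hk; apply: h.
case: k hk => n hk; exists n => //; [left|right]; exact: hk.
Qed.

Lemma Gset_shift w : Gset (shiftZ w) <-> Gset w.
Proof.
rewrite /Gset /=; split => h k.
  by have := h (k - 1); rewrite shiftZk shiftkD addrC subrK.
by rewrite shiftZk shiftkD; exact: h.
Qed.

Lemma Gset_E0 w : Gset w -> gmap (shiftZ w) = odo (gmap w).
Proof. by move=> /(_ 0); rewrite shiftk0. Qed.

Lemma Gset_iter j w : Gset w ->
  Gset (iter j shiftZ w) /\ gmap (iter j shiftZ w) = iter j odo (gmap w).
Proof.
elim: j => [|j IH] Gw //=; have [Gj ej] := IH Gw.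
by split; [exact/Gset_shift | rewrite Gset_E0 // ej].
Qed.

Lemma gamX B C : gam @^-1` (B `*` C) = B `&` gmap @^-1` C.
Proof. by []. Qed.

Lemma gA0 n : gmap @^-1` Ark 0 n = Bset f (ralpha n alpha) n.
Proof.
apply/seteqP; split => w; rewrite /preimage /Bset ArkE /= rg /Dn -modnDml;
  have lt := ltn_pmod (sf n w) (expn_gt0 2 n);
  have rl := ralpha_lt n alpha.
  move=> /eqP; rewrite modP_sub // => /eqP e.
  by rewrite sf_spec; apply/(@rho_eq R); rewrite e modn_small.
rewrite sf_spec => /(@rho_eq R) e; apply/eqP; rewrite modP_sub // e modn_small //.
Qed.

Lemma mBset n : measurable (Bset f (ralpha n alpha) n).
Proof. by rewrite -gA0; apply: mpre; [exact: mgmap|exact: mArk]. Qed.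

Variable nu : probability XZN R.
Hypothesis hnu : forall A, nu A = eta (gam @^-1` A).

Lemma nu_inM : inM nu.
Proof.
move=> A mA; rewrite !hnu.
rewrite -(eta_inv _ (mpre mgam _ mA)).
apply: (@meas_ae_eq _ _ _ eta (~` Gset)).
- exact: measurableC mGset.
- exact: Gset_null.
- by apply: mpre; [exact: mgam|apply: mpre; [exact: mSO|exact: mA]].
- by apply: mpre; [exact: mshiftZ|apply: mpre; [exact: mgam|exact: mA]].
- apply/seteqP; split => w /= [h hG]; split => //; move: hG => /contrapT hG;
    by move: h; rewrite /gam /SO /= Gset_E0.
Qed.

Lemma nu_theta n B : measurable B ->
  (theta n nu B)%:E = theta_alpha eta f alpha n B.
Proof.
move=> mB; rewrite /theta /theta_alpha (@Mlem R nu nu_inM) /= invrK hnu gamX gA0.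
rewrite EFinM fineK ?fin_num_measure //; last first.
  by apply: measurableI => //; exact: mBset.
by rewrite muleC.
Qed.

Hypothesis eta_erg : ergodic eta shiftZ.

Lemma nu_erg : ergodic nu SO.
Proof.
move=> A mA hA.
have hA' w a : A (shiftZ w, odo a) = A (w, a) := congr1 (fun S : set XZN => S (w, a)) hA.
set A' := gam @^-1` A.
have mA' : measurable A' := mpre mgam _ mA.
have mAG : measurable (A' `&` Gset) := measurableI _ _ mA' mGset.
have key w : Gset w -> A' (shiftZ w) = A' w.
  by move=> hG; rewrite /A' /preimage /gam /= (Gset_E0 _ hG) hA'.
have inv : shiftZ @^-1` (A' `&` Gset) = A' `&` Gset.
  apply/seteqP; split => w /= [h1 h2].
    have hG : Gset w by apply/Gset_shift.
    by split => //; rewrite -key.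
  have hG : Gset (shiftZ w) by apply/Gset_shift.
  by split => //; rewrite key.
have e : nu A = eta (A' `&` Gset).
  rewrite hnu; apply: (@meas_ae_eq _ _ _ eta (~` Gset)) => //.
  - exact: measurableC mGset.
  - exact: Gset_null.
  - by rewrite setCK -setIA setIid.
rewrite e; exact: eta_erg mAG inv.
Qed.

Lemma concentration (nu' : probability XZN R) : inM nu' ->
  (forall n B, measurable B -> (theta n nu' B)%:E = theta_alpha eta f alpha n B) ->
  forall A, measurable A -> nu' A = eta (gam @^-1` A).
Proof.
move=> inv' hth.
have marg X : measurable X -> nu' (X `*` setT) = eta X.
  move=> mX; have := hth 0%N X mX.
  rewrite /theta /theta_alpha expr0 mul1e.
  have -> : Ark 0 0 = setT.
    by rewrite ArkE; apply/seteqP; split => a //= _; rewrite ralpha0.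
  have -> : Bset f (ralpha 0 alpha) 0 = setT.
    apply/seteqP; split => w // _; rewrite /Bset /= ralpha0 expr0.
    by case: fad => _ [_ [f0 _]]; rewrite f0.
  rewrite setIT setXTT probability_setT /= divr1 fineK //.
  by apply: fin_num_measure; exact: measurableX.
have hB n : nu' (~` Bset f (ralpha n alpha) n `*` Ark 0 n) = 0%E.
  have mBc := measurableC (mBset n).
  have := hth n _ mBc.
  rewrite /theta /theta_alpha setICl measure0 mule0 (@Mlem R nu' inv') /= invrK.
  move=> /(congr1 fine) /= /eqP; rewrite mulf_eq0 expf_eq0 pnatr_eq0 andbF orbF => /eqP h0.
  rewrite -(fineK (fin_num_measure _ _ (measurableX mBc (mArk 0 n)))) h0 //.
have nu_iter j Y : measurable Y -> nu' (iter j SO @^-1` Y) = nu' Y.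
  elim: j Y => [|j IH] Y mY //.
  have mS : measurable (SO @^-1` Y) := mpre mSO _ mY.
  by rewrite -(inv' _ mY) -(IH _ mS).
set N := (~` Gset `*` setT) `|` \bigcup_n \bigcup_j
   (iter j SO @^-1` (~` Bset f (ralpha n alpha) n `*` Ark 0 n)).
have mP n j : measurable (iter j SO @^-1` (~` Bset f (ralpha n alpha) n `*` Ark 0 n)).
  apply: (mpre (miter mSO j)); apply: measurableX; last exact: mArk.
  exact: measurableC (mBset n).
have mN : measurable N.
  apply: measurableU; first by apply: measurableX => //; exact: measurableC mGset.
  by apply: bigcupT_measurable => n; apply: bigcupT_measurable => j; exact: mP.
have N0 : nu' N = 0%E.
  apply/negligibleP => //; apply: negligibleU.
    apply/negligibleP; first by apply: measurableX => //; exact: measurableC mGset.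
    exact: (etrans (marg _ (measurableC mGset)) Gset_null).
  apply: negligible_bigcup => n; apply: negligible_bigcup => j.
  apply/negligibleP; first exact: mP.
  apply: (etrans (nu_iter _ _ _) (hB n)); apply: measurableX; last exact: mArk.
  exact: measurableC (mBset n).
have good w a : ~ N (w, a) -> a = gmap w.
  move=> nN; apply: contrapT => ne; apply: nN.
  have [hG|nG] := pselect (Gset w); last by left.
  right.
  have [n hn] : exists n, ralpha n a <> ralpha n (gmap w).
    apply: contrapT => h; apply: ne; apply: ralpha_inj => n.
    by apply: contrapT => hn; apply: h; exists n.
  exists n => //; exists (2 ^ n - ralpha n a)%N => //.
  rewrite /preimage /= iter_SO /=; have [_ eg] := Gset_iter (2 ^ n - ralpha n a)%N w hG.
  have la := ralpha_lt n a; have lg := ralpha_lt n (gmap w).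
  split.
    rewrite -gA0 /preimage /= eg ArkE /= r_iter_odo => /eqP.
    by rewrite modP_sub //; move/eqP => e; apply: hn.
  by rewrite ArkE /= r_iter_odo subnKC ?modnn //; exact: ltnW.
move=> A mA.
rewrite -marg; last exact: mpre mgam _ mA.
apply: (@meas_ae_eq _ _ _ nu' N) => //; first by apply: measurableX => //; exact: mpre mgam _ mA.
apply/seteqP; split => -[w a] /= [h1 h2]; split => //;
  have e := good w a h2.
  by split => //; rewrite /preimage /gam /= -e.
by move: h1 => [h1 _]; move: h1; rewrite /preimage /gam /= -e.
Qed.

Lemma nu_aper (m : probability IN R) : uniform_bernoulli m -> ~ periodic_type m nu.
Proof.
move=> hm [k [eta' [_ hper]]].
set K := k.+1.
set B := Bset f (ralpha K alpha) K.
have mB : measurable B := mBset K.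
have mK0 : m (Ark 0 K) = ((2:R) ^- K)%:E.
  rewrite -(hm K (fun _ => false)); congr (m _); rewrite ArkE.
  by apply/seteqP; split => a /=; move/ralpha_eq0.
have mK1 : m (Ark (2 ^ k) K) = ((2:R) ^- K)%:E.
  rewrite -(hm K (fun i => i == k)); congr (m _); rewrite ArkE.
  by apply/seteqP; split => a /=; move/ralpha_eqpow.
have lt0 : (0 < 2 ^ k)%N by rewrite expn_gt0.
set o := Ordinal lt0.
have sumE c : (c %% 2 ^ k = 0)%N ->
    (\sum_(i < 2 ^ k) eta' (iter i shiftZ @^-1` B) * m (Ark i k `&` Ark c K))%E
    = (eta' B * m (Ark c K))%E.
  move=> c0; rewrite (bigD1 o) //= big1 ?adde0.
    congr (_ * m _)%E; apply/seteqP; split => a; first by case.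
    by move=> h; split => //; rewrite ArkE /= (ralpha_mod k) -/K; move: h; rewrite ArkE /= => ->.
  move=> i io; have -> : Ark i k `&` Ark c K = set0; last by rewrite measure0 mule0.
  apply/seteqP; split => // a [h1 h2]; move: h1 h2; rewrite !ArkE /= => h1 h2.
  move/negP: io; apply; apply/eqP; apply: val_inj => /=; rewrite -h1 (ralpha_mod k) -/K h2 //.
have e : nu (B `*` Ark 0 K) = nu (B `*` Ark (2 ^ k) K).
  rewrite !hper //; try exact: mArk.
  by rewrite !sumE ?mod0n ?modnn // mK0 mK1.
move: e; rewrite !hnu !gamX gA0 -/B setIid.
have emp : B `&` gmap @^-1` Ark (2 ^ k) K = set0.
  apply/seteqP; split => // w []; rewrite /B -gA0 /preimage !ArkE /= => ->.
  by move=> /esym /eqP; rewrite expn_eq0.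
rewrite emp measure0.
have : eta B = nu (setT `*` Ark 0 K) by rewrite hnu gamX gA0 setTI.
rewrite (@Mlem R nu nu_inM) => -> /eqP; rewrite eqe invr_eq0 expf_eq0 pnatr_eq0 andbF.
by [].
Qed.

Lemma Bset0 : Bset f (ralpha 0 alpha) 0 = setT.
Proof.
apply/seteqP; split => w // _; rewrite /Bset /= ralpha0 expr0.
by case: fad => _ [_ [f0 _]]; rewrite f0.
Qed.

Lemma theta0_eq (nu' : probability XZN R) B :
  (theta 0 nu' B)%:E = theta_alpha eta f alpha 0 B -> (theta 0 nu' B)%:E = eta B.
Proof. by move=> ->; rewrite /theta_alpha expr0 mul1e Bset0 setIT. Qed.

End Graph.
Section Fac.
Variables (R : realType) (eta : probability IZ R) (pi : IZ -> IN).
Hypothesis mpi : measurable_fun setT pi.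
Hypothesis hpi : {ae eta, forall w, pi (shiftZ w) = odo (pi w)}.

Definition fpi (n : nat) (w : IZ) : complex.complex R := rho n ^+ ralpha n (pi w).

Lemma fpi_adm : admissible eta fpi.
Proof.
split; [|split; [|split]].
- move=> n; have mr := measurableT_comp (mralpha n) mpi.
  split.
    exact: (measurableT_comp (@mdisc _ _ (fun j => complex.Re (rho n ^+ j : complex.complex R))) mr).
  exact: (measurableT_comp (@mdisc _ _ (fun j => complex.Im (rho n ^+ j : complex.complex R))) mr).
- move=> n; apply: (negligibleS _ hpi) => w /= h1 h2; apply: h1.
  rewrite /fpi h2 r_odo -rho_mod exprS //.
- by move=> w; rewrite /fpi ralpha0 expr0.
- move=> n w; rewrite /fpi -exprM mulnC exprM rho_sq; apply/(@rho_eq R).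
  by rewrite {1}(ralpha_mod n (pi w)) modn_mod.
Qed.

End Fac.
Theorem lemma6 (R : realType) (m : probability IN R)
  (hm : uniform_bernoulli m)
  (eta : probability IZ R)
  (eta_inv : invariant_measure eta shiftZ)
  (eta_erg : ergodic eta shiftZ)
  (eta_fac : has_odometer_factor m eta) :
  (* such a family (f_n) exists *)
  (exists f : nat -> IZ -> complex.complex R, admissible eta f) /\
  (* for any such family and every alpha, nu^(alpha)[eta] exists, lies in M,
     and (every element of M with these theta_n) is ergodic with theta_0 = eta *)
  (forall (f : nat -> IZ -> complex.complex R), admissible eta f ->
   forall alpha : IN,
     (exists nu : probability XZN R, inM nu /\
        forall n (B : set IZ), measurable B ->
          (theta n nu B)%:E = theta_alpha eta f alpha n B) /\
     (forall nu : probability XZN R, inM nu ->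
        (forall n (B : set IZ), measurable B ->
          (theta n nu B)%:E = theta_alpha eta f alpha n B) ->
        ergodic nu SO /\
        (forall B : set IZ, measurable B -> (theta 0 nu B)%:E = eta B))) /\
  (* in particular, an aperiodic ergodic nu in M with theta_0 = eta *)
  (exists nu : probability XZN R,
     inM nu /\ ergodic nu SO /\ ~ periodic_type m nu /\
     (forall B : set IZ, measurable B -> (theta 0 nu B)%:E = eta B)).
Proof.
have [pi [mpi [hpi _]]] := eta_fac.
have fadm := @fpi_adm R eta pi mpi hpi.
have part2 : forall (f : nat -> IZ -> complex.complex R), admissible eta f ->
   forall alpha : IN,
     (exists nu : probability XZN R, inM nu /\
        forall n (B : set IZ), measurable B ->
          (theta n nu B)%:E = theta_alpha eta f alpha n B) /\
     (forall nu : probability XZN R, inM nu ->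
        (forall n (B : set IZ), measurable B ->
          (theta n nu B)%:E = theta_alpha eta f alpha n B) ->
        ergodic nu SO /\
        (forall B : set IZ, measurable B -> (theta 0 nu B)%:E = eta B)).
  move=> f fad alpha.
  have [nu hnu] := @push_prob _ _ _ _ R eta _ (@mgam R eta f fad alpha).
  split.
    exists nu; split; first exact: (@nu_inM R eta f fad alpha eta_inv nu hnu).
    by move=> n B mB; exact: (@nu_theta R eta f fad alpha eta_inv nu hnu n B mB).
  move=> nu' inv' hth; split.
    move=> A mA hA.
    have := @nu_erg R eta f fad alpha eta_inv nu hnu eta_erg A mA hA.
    by rewrite hnu (@concentration R eta f fad alpha eta_inv nu' inv' hth A mA).
  by move=> B mB; apply: (@theta0_eq R eta f fad alpha); exact: hth.
split; first by exists (fpi R pi).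
split; first exact: part2.
set alpha : IN := fun _ => false.
have [nu hnu] := @push_prob _ _ _ _ R eta _ (@mgam R eta (fpi R pi) fadm alpha).
have inv := @nu_inM R eta (fpi R pi) fadm alpha eta_inv nu hnu.
exists nu; split => //; split.
  exact: (@nu_erg R eta (fpi R pi) fadm alpha eta_inv nu hnu eta_erg).
split; first exact: (@nu_aper R eta (fpi R pi) fadm alpha eta_inv nu hnu m hm).
move=> B mB; apply: (@theta0_eq R eta (fpi R pi) fadm alpha).
exact: (@nu_theta R eta (fpi R pi) fadm alpha eta_inv nu hnu 0 B mB).
Qed.
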